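(* Let $\mathcal G=(V,E,r)$ be a graph. The divisor class group of $\mathbf A(\mathcal G)$ is free abelian of rank $2|E|-|V|+\iota$, where $\iota$ is the number of isolated vertices of $\mathcal G$.
   Context: A graph $\mathcal G=(V,E,r)$ consists of a finite vertex set $V$, a finite edge set $E$ disjoint from $V$, and a map $r$ assigning to each edge a two-element subset of $V$; multiple edges allowed, no loops. An agglomeration on $\mathcal G$ is a function $a\colon V\cup E\to\mathbb N_0$ with $a(v)\ge a(e)$ whenever $v$ is incident with $e$; $\mathbf A(\mathcal G)$ is the monoid of agglomerations under pointwise addition; it is a Krull monoid. For a Krull monoid $H$ with divisor theory $\varphi\colon H\to D=\mathbb N_0^{(I)}$ (a divisor homomorphism, i.e. $\varphi(a)$ a summand of $\varphi(b)$ implies $a$ a summand of $b$, such that each standard basis vector is a pointwise minimum of finitely many elements of $\varphi(H)$), the divisor class group is $\mathbf q(D)/\mathbf q(\varphi(H))$, where $\mathbf q$ denotes the quotient group; it is independent of the choice of divisor theory. *)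

(* Defs.v *)
From Stdlib Require List.
From mathcomp Require Import all_boot all_order all_algebra.
Set Implicit Arguments. Unset Strict Implicit. Unset Printing Implicit Defensive.
Import Order.TTheory GRing.Theory Num.Theory.

(* A graph (V, E, r): finite vertex type V, finite edge type E, and
   r e = the two (distinct) endpoints of e.  Multiple edges allowed
   (r need not be injective), no loops. *)
Record graph := Graph {
  gV : finType;
  gE : finType;
  gr : gE -> gV * gV;
  gr_noloop : forall e, (gr e).1 != (gr e).2
}.

Definition incident (G : graph) (v : gV G) (e : gE G) : bool :=
  (v == (gr e).1) || (v == (gr e).2).

Definition isolated (G : graph) (v : gV G) : bool :=
  [forall e : gE G, ~~ incident v e].

Definition n_isolated (G : graph) : nat := #|[set v : gV G | isolated v]|.

Definition carrier (G : graph) := {ffun (gV G + gE G)%type -> nat}.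

Definition agglomeration (G : graph) (a : carrier G) : Prop :=
  forall (v : gV G) (e : gE G), incident v e -> a (inr e) <= a (inl v).

Definition addc (G : graph) (a b : carrier G) : carrier G :=
  [ffun x => a x + b x].

Definition finsupp_nat (I : Type) (f : I -> nat) : Prop :=
  exists s : seq I, forall i, f i <> 0%N -> List.In i s.
Definition finsupp_int (I : Type) (f : I -> int) : Prop :=
  exists s : seq I, forall i, f i <> 0%R -> List.In i s.

Definition divisor_theory (G : graph) (I : Type) (phi : carrier G -> I -> nat)
  : Prop :=
  (forall a, agglomeration a -> finsupp_nat (phi a)) /\
  (forall i, phi [ffun _ => 0%N] i = 0%N) /\
  (forall a b, agglomeration a -> agglomeration b ->
     forall i, phi (addc a b) i = (phi a i + phi b i)%N) /\
  (forall a b, agglomeration a -> agglomeration b ->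
     (forall i, phi a i <= phi b i) ->
     exists c, agglomeration c /\ b = addc a c) /\
  (* each standard basis vector is a pointwise minimum of finitely many
     (and at least one) elements of phi(H) *)
  (forall i : I, exists (a0 : carrier G) (s : seq (carrier G)),
     agglomeration a0 /\ (forall a, List.In a s -> agglomeration a) /\
     let m := fun j => foldr (fun a k => minn (phi a j) k) (phi a0 j) s in
     m i = 1%N /\ forall j, j <> i -> m j = 0%N).

(* The divisor class group q(D)/q(phi(H)) is free abelian of rank n:
   there is a surjective group homomorphism from q(D) (finitely supported
   I -> Z) onto Z^n whose kernel is q(phi(H)) = {phi a - phi b : a, b in H}. *)
Definition class_group_free_of_rank (G : graph) (I : Type)
    (phi : carrier G -> I -> nat) (n : nat) : Prop :=
  exists psi : (I -> int) -> ('I_n -> int),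
    (forall f g, finsupp_int f -> finsupp_int g ->
        psi (fun i => f i + g i)%R = (fun k => psi f k + psi g k)%R) /\
    (forall y : 'I_n -> int, exists f, finsupp_int f /\ psi f = y) /\
    (forall f, finsupp_int f ->
       (psi f = (fun _ => 0%R) <->
        exists a b, agglomeration a /\ agglomeration b /\
          f = (fun i => (phi a i)%:Z - (phi b i)%:Z)%R)).

(* Main.v *)
Require Import Defs.
From mathcomp Require Import all_boot all_order all_algebra.
From mathcomp Require Import zify ring.
From Stdlib Require Import Classical ClassicalEpsilon FunctionalExtensionality.
Set Implicit Arguments. Unset Strict Implicit. Unset Printing Implicit Defensive.
Import GRing.Theory Num.Theory.

Definition endp (G : graph) (e : gE G) (s : bool) : gV G :=
  if s then (gr e).2 else (gr e).1.

Definition Tt (G : graph) : finType :=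
  ((gE G * bool) + gE G + {v : gV G | isolated v})%type.

Definition sgn (G : graph) (t : Tt G) (a : carrier G) : nat :=
  match t with
  | inl (inl (e, s)) => a (inl (endp e s)) - a (inr e)
  | inl (inr e) => a (inr e)
  | inr w => a (inl (val w))
  end.

Definition sgZ (G : graph) (t : Tt G) (x : gV G + gE G -> int) : int :=
  match t with
  | inl (inl (e, s)) => (x (inl (endp e s)) - x (inr e))%R
  | inl (inr e) => x (inr e)
  | inr w => x (inl (val w))
  end.

Definition toZ (G : graph) (a : carrier G) : gV G + gE G -> int :=
  fun y => Posz (a y).

Definition z0 (G : graph) : carrier G := [ffun _ => 0%N].
Definition smul (G : graph) (k : nat) (a : carrier G) : carrier G :=
  [ffun y => k * a y].

Lemma incident_endp (G : graph) (e : gE G) s : incident (endp e s) e.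
Proof. by rewrite /incident /endp; case: s; rewrite eqxx ?orbT. Qed.

Lemma incident_endpE (G : graph) (v : gV G) e :
  incident v e -> exists s, v = endp e s.
Proof.
rewrite /incident => /orP[] /eqP ->; [by exists false | by exists true].
Qed.

Lemma endp_inj (G : graph) (e : gE G) s s' : endp e s = endp e s' -> s = s'.
Proof.
have := gr_noloop e; rewrite /endp.
by case: s; case: s' => // h E; move: h; rewrite E eqxx.
Qed.

Lemma H_addc (G : graph) (a b : carrier G) :
  agglomeration a -> agglomeration b -> agglomeration (addc a b).
Proof. move=> ha hb v e ie; rewrite !ffunE; exact: leq_add (ha _ _ ie) (hb _ _ ie). Qed.

Lemma H_z0 (G : graph) : agglomeration (z0 G).
Proof. by move=> v e _; rewrite !ffunE. Qed.

Lemma H_smul (G : graph) k (a : carrier G) :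
  agglomeration a -> agglomeration (smul k a).
Proof. move=> ha v e ie; rewrite !ffunE; exact: leq_mul (ha _ _ ie). Qed.

Lemma sgn_add (G : graph) (t : Tt G) (a b : carrier G) :
  agglomeration a -> agglomeration b -> sgn t (addc a b) = sgn t a + sgn t b.
Proof.
move=> ha hb; case: t => [[[e s]|e]|w] /=; rewrite !ffunE //.
have := ha _ _ (incident_endp e s); have := hb _ _ (incident_endp e s). lia.
Qed.

Lemma sgn_z0 (G : graph) (t : Tt G) : sgn t (z0 G) = 0.
Proof. by case: t => [[[e s]|e]|w] /=; rewrite !ffunE. Qed.

Lemma sgn_Z (G : graph) (t : Tt G) (a : carrier G) :
  agglomeration a -> Posz (sgn t a) = sgZ t (toZ a).
Proof.
move=> ha; case: t => [[[e s]|e]|w] //=; rewrite /toZ.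
by rewrite subzn // ha // incident_endp.
Qed.

Lemma L0 (G : graph) (x : gV G + gE G -> int) :
  (forall t : Tt G, (0 <= sgZ t x)%R) ->
  exists c : carrier G, agglomeration c /\ forall y, Posz (c y) = x y.
Proof.
move=> hx.
have pos : forall y, (0 <= x y)%R.
  case=> [v|e]; last exact: (hx (inl (inr e))).
  case: (boolP (isolated v)) => iv; first exact: (hx (inr (exist _ v iv))).
  move: iv; rewrite /isolated negb_forall => /existsP[e]; rewrite negbK => ie.
  have [s ->] := incident_endpE ie.
  have h1 := hx (inl (inl (e, s))); have h2 := hx (inl (inr e)).
  move: h1 h2 => /=; lia.
exists [ffun y => `|x y|%N]; split.
  move=> v e ie; rewrite !ffunE; have [s ->] := incident_endpE ie.
  have h1 := hx (inl (inl (e, s))); move: h1 (pos (inr e)) => /=; lia.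
by move=> y; rewrite ffunE gez0_abs // pos.
Qed.
Lemma sgZ_lin (G : graph) (t : Tt G) (c1 c2 c3 : int) (x1 x2 x3 : gV G + gE G -> int) :
  sgZ t (fun y => c1 * x1 y + c2 * x2 y + c3 * x3 y)%R =
  (c1 * sgZ t x1 + c2 * sgZ t x2 + c3 * sgZ t x3)%R.
Proof. case: t => [[[e s]|e]|w] /=; ring. Qed.

Definition gEl (G : graph) (e : gE G) : carrier G :=
  [ffun y => match y with inl v => nat_of_bool (incident v e) | inr e' => nat_of_bool (e' == e) end].
Definition one (G : graph) : carrier G := [ffun _ => 1].
Definition qE (G : graph) (e : gE G) : carrier G :=
  [ffun y => match y with inl _ => 1 | inr e' => nat_of_bool (e' != e) end].
Definition dV (G : graph) (v : gV G) : carrier G :=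
  [ffun y => match y with inl w => nat_of_bool (w == v) | inr _ => 0 end].

Lemma H_gEl G e : agglomeration (gEl (G:=G) e).
Proof. move=> v e' ie; rewrite !ffunE; case: eqP => [<-|//]; by rewrite ie. Qed.
Lemma H_one G : agglomeration (one G).
Proof. by move=> v e ie; rewrite !ffunE. Qed.
Lemma H_qE G e : agglomeration (qE (G:=G) e).
Proof. by move=> v e' ie; rewrite !ffunE; case: (e' != e). Qed.
Lemma H_dV G v : agglomeration (dV (G:=G) v).
Proof. by move=> w e ie; rewrite !ffunE. Qed.

Lemma isolated_not_endp G (w : gV G) e s : isolated w -> endp e s != w.
Proof.
move=> /forallP /(_ e); apply: contra => /eqP <-; exact: incident_endp.
Qed.

Lemma inL (A : eqType) (x : A) (s : seq A) : x \in s -> List.In x s.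
Proof. elim: s => // a s IH; rewrite inE => /orP[/eqP ->|/IH]; [left|right] => //. Qed.

Lemma sgn_dt (G : graph) : divisor_theory (fun a (t : Tt G) => sgn t a).
Proof.
split; [|split; [|split; [|split]]].
- move=> a _; exists (enum (Tt G)) => t _; apply: inL; exact: mem_enum.
- move=> t; exact: sgn_z0.
- move=> a b ha hb t; exact: sgn_add.
- move=> a b ha hb hle.
  have hx : forall t, (0 <= sgZ t (fun y => (1 * toZ b y + (-1) * toZ a y + 0 * toZ a y)%R))%R.
    move=> t; rewrite sgZ_lin -!sgn_Z //; have := hle t; lia.
  have [c [hc ec]] := L0 hx.
  exists c; split => //; apply/ffunP => y; rewrite /addc ffunE; move: (ec y); rewrite /toZ => h; apply/eqP; rewrite -eqz_nat PoszD h; apply/eqP; ring.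
- case=> [[[e s]|e]|w].
  + exists (qE e), [:: dV (endp e s)]; split; first exact: H_qE.
    split; first by move=> a [<-|//]; exact: H_dV.
    rewrite /= !ffunE !eqxx /= subn0; split => //.
    case=> [[[e' s']|e']|w'] hne /=; rewrite !ffunE /=.
    * case: (eqVneq e' e) => [E|ne]; last by rewrite /= subnn minn0.
      subst e'; have ss : s' <> s by move=> E'; apply: hne; rewrite E'.
      case: eqP => [/endp_inj //|_]; by rewrite min0n.
    * by rewrite min0n.
    * have := isolated_not_endp e s (valP w'); rewrite eq_sym => /negbTE ->.
      by rewrite min0n.
  + exists (gEl e), [:: one G]; split; first exact: H_gEl.
    split; first by move=> a [<-|//]; exact: H_one.
    rewrite /= !ffunE !eqxx /=; split => //.
    case=> [[[e' s']|e']|w'] hne /=; rewrite !ffunE /=.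
    * by rewrite subnn min0n.
    * case: eqP => [E|_]; first by subst e'; case: hne.
      by rewrite minn0.
    * have := valP w' => /forallP /(_ e) /negbTE ->; by rewrite minn0.
  + exists (dV (val w)), [::]; split; first exact: H_dV.
    split; first by [].
    rewrite /= !ffunE !eqxx /=; split => //.
    case=> [[[e' s']|e']|w'] hne /=; rewrite !ffunE /=.
    * by rewrite (negbTE (isolated_not_endp e' s' (valP w))).
    * by [].
    * case: eqP => // /val_inj E; by case: hne; rewrite E.
Qed.
Lemma foldr_min_att (A : Type) (f : A -> nat) (a0 : A) (s : seq A) :
  (exists b, (b = a0 \/ List.In b s) /\ foldr (fun a k => minn (f a) k) (f a0) s = f b) /\
  (forall b, (b = a0 \/ List.In b s) -> foldr (fun a k => minn (f a) k) (f a0) s <= f b).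
Proof.
elim: s => [|a s [[b [hb eb]] IH]] /=.
  split; first by exists a0; split; [left|].
  by move=> b [->|].
split.
  case: (leqP (f a) (foldr (fun a k => minn (f a) k) (f a0) s)) => h.
  - by exists a; split; [right; left|].
  - exists b; split; first by case: hb; [left|right; right].
    by rewrite -eb.
move=> c [->|[<-|hc]].
- apply: leq_trans (geq_minr _ _) _; apply: IH; left => //.
- exact: geq_minl.
- apply: leq_trans (geq_minr _ _) (IH _ _); by right.
Qed.

Lemma dt_sep (G : graph) (I : Type) (phi : carrier G -> I -> nat) :
  divisor_theory phi -> forall i j, j <> i ->
  exists a, agglomeration a /\ 1 <= phi a i /\ phi a j = 0.
Proof.
move=> [_ [_ [_ [_ hm]]]] i j ne.
have [a0 [s [h0 [hs hm']]]] := hm i; case: hm' => m1 m0.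
have [[b [hb eb]] _] := foldr_min_att (fun a => phi a j) a0 s.
have [_ le] := foldr_min_att (fun a => phi a i) a0 s.
exists b; split; first by case: hb => [->|/hs].
split; last by rewrite -eb; exact: m0.
rewrite -m1; exact: le.
Qed.

Lemma dt_one (G : graph) (I : Type) (phi : carrier G -> I -> nat) :
  divisor_theory phi -> forall i, exists a, agglomeration a /\ phi a i = 1.
Proof.
move=> [_ [_ [_ [_ hm]]]] i.
have [a0 [s [h0 [hs hm']]]] := hm i; case: hm' => m1 m0.
have [[b [hb eb]] _] := foldr_min_att (fun a => phi a i) a0 s.
exists b; split; first by case: hb => [->|/hs].
by rewrite -eb.
Qed.

Lemma dt_inj (G : graph) (I : Type) (phi : carrier G -> I -> nat) :
  divisor_theory phi -> forall i j,
  (forall a, agglomeration a -> phi a i = phi a j) -> i = j.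
Proof.
move=> dt i j h; apply: NNPP => ne.
have [a [ha [h1 h0]]] := dt_sep dt (fun E => ne (esym E)).
by move: h1; rewrite h // h0.
Qed.

Lemma dt_smul (G : graph) (I : Type) (phi : carrier G -> I -> nat) :
  divisor_theory phi -> forall k a i, agglomeration a ->
  phi (smul k a) i = k * phi a i.
Proof.
move=> [_ [h0 [hadd _]]] k a i ha; elim: k => [|k IH].
  have -> : smul 0 a = [ffun _ => 0] by apply/ffunP => y; rewrite !ffunE.
  by rewrite h0.
have -> : smul k.+1 a = addc a (smul k a) by apply/ffunP => y; rewrite !ffunE mulSn.
by rewrite hadd ?IH ?mulSn //; exact: H_smul.
Qed.

Definition csum (G : graph) (A : Type) (l : seq A) (F : A -> carrier G) : carrier G :=
  foldr (fun t acc => addc (F t) acc) (z0 G) l.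

Lemma csum_H (G : graph) (A : Type) (l : seq A) (F : A -> carrier G) :
  (forall t, agglomeration (F t)) -> agglomeration (csum l F).
Proof. move=> hF; elim: l => [|t l IH] /=; [exact: H_z0 | exact: H_addc]. Qed.

Lemma csum_fun (G : graph) (A : Type) (l : seq A) (F : A -> carrier G)
    (psi : carrier G -> nat) :
  psi (z0 G) = 0 ->
  (forall a b, agglomeration a -> agglomeration b -> psi (addc a b) = psi a + psi b) ->
  (forall t, agglomeration (F t)) -> psi (csum l F) = \sum_(t <- l) psi (F t).
Proof.
move=> h0 hadd hF; elim: l => [|t l IH] /=; first by rewrite big_nil.
by rewrite big_cons hadd ?IH //; exact: csum_H.
Qed.

Lemma sum_ge_In (A : Type) (f : A -> nat) (s : seq A) x :
  List.In x s -> f x <= \sum_(j <- s) f j.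
Proof.
elim: s => // a s IH [->|/IH h]; rewrite big_cons; first exact: leq_addr.
exact: leq_trans h (leq_addl _ _).
Qed.

Lemma sum_ge_fin (T : finType) (f : T -> nat) x : f x <= \sum_(j : T) f j.
Proof. by rewrite (bigD1 x) //= leq_addr. Qed.

Lemma choiceT (G : graph) (P : Tt G -> carrier G -> Prop) :
  (forall t, exists y, agglomeration y /\ P t y) ->
  exists F : Tt G -> carrier G, (forall t, agglomeration (F t)) /\ forall t, P t (F t).
Proof.
move=> h; exists (fun t => proj1_sig (constructive_indefinite_description _ (h t))).
split => t; by case: (constructive_indefinite_description _ (h t)) => y [].
Qed.
Lemma sgn_smul (G : graph) (t : Tt G) k (a : carrier G) :
  agglomeration a -> sgn t (smul k a) = k * sgn t a.
Proof. exact: (dt_smul (sgn_dt G)). Qed.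

Lemma interior_facet (G : graph) (t : Tt G) :
  exists h, agglomeration h /\ sgn t h = 0 /\
    forall t', t' <> t -> 1 <= sgn t' h.
Proof.
have hex : forall t', exists y, agglomeration y /\
    (sgn t y = 0 /\ (t' <> t -> 1 <= sgn t' y)).
  move=> t'; case: (eqVneq t' t) => [->|ne].
    exists (z0 G); split; first exact: H_z0.
    by split; [exact: sgn_z0|].
  have [a [ha [h1 h0]]] := dt_sep (sgn_dt G) (i := t') (j := t) (fun E => (negP ne) (introT eqP (esym E))).
  by exists a.
have [F [hF PF]] := choiceT hex.
exists (csum (enum (Tt G)) F); split; first exact: csum_H.
have e t0 : sgn t0 (csum (enum (Tt G)) F) = \sum_(t' <- enum (Tt G)) sgn t0 (F t').
  apply: csum_fun => //; [exact: sgn_z0 | move=> *; exact: sgn_add].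
split.
  rewrite e big1_seq // => t' _; by case: (PF t').
move=> t' ne; rewrite e; apply: leq_trans (sum_ge_In (fun t'' => sgn t' (F t'')) _).
  by case: (PF t') => _; apply.
apply: inL; exact: mem_enum.
Qed.

Lemma interior (G : graph) :
  exists u, agglomeration u /\ forall t : Tt G, 1 <= sgn t u.
Proof.
have hex : forall t : Tt G, exists y, agglomeration y /\ 1 <= sgn t y.
  move=> t; have [a [ha h1]] := dt_one (sgn_dt G) t; exists a; by rewrite h1.
have [F [hF PF]] := choiceT hex.
exists (csum (enum (Tt G)) F); split; first exact: csum_H.
move=> t.
have -> : sgn t (csum (enum (Tt G)) F) = \sum_(t' <- enum (Tt G)) sgn t (F t').
  apply: csum_fun => //; [exact: sgn_z0 | move=> *; exact: sgn_add].
apply: leq_trans (PF t) (sum_ge_In (fun t'' => sgn t (F t'')) _).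
apply: inL; exact: mem_enum.
Qed.

Lemma stepX (G : graph) (I : Type) (phi : carrier G -> I -> nat) :
  divisor_theory phi -> forall (t : Tt G) h z,
  agglomeration h -> sgn t h = 0 -> agglomeration z -> 1 <= sgn t z ->
  exists j, phi h j = 0.
Proof.
move=> dt t h z hh sh hz sz; apply: NNPP => nex.
have hall : forall j, 1 <= phi h j.
  move=> j; rewrite lt0n; apply/eqP => E; apply: nex; by exists j.
have dt' := dt; case: dt' => [hfs [_ [_ [hdiv _]]]].
have [s hs] := hfs z hz.
pose K := \sum_(j <- s) phi z j.
have hle : forall j, phi z j <= phi (smul K h) j.
  move=> j; rewrite (dt_smul dt) //.
  case: (eqVneq (phi z j) 0) => [->//|nz].
  have : phi z j <= K by apply: sum_ge_In; apply: hs; apply/eqP.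
  move=> hK; apply: leq_trans hK _; exact: leq_pmulr (hall j).
have [c [hc ec]] := hdiv _ _ hz (H_smul K hh) hle.
have := congr1 (sgn t) ec; rewrite sgn_smul // sh muln0 sgn_add //.
move=> E; lia.
Qed.
Lemma ffun_eq_Z (G : graph) (c a b d : carrier G) (x : gV G + gE G -> int) :
  (forall y, Posz (c y) = x y) ->
  (forall y, (Posz (c y) + Posz (a y) = Posz (b y) + Posz (d y))%R) ->
  addc c a = addc b d.
Proof.
move=> _ h; apply/ffunP => y; rewrite !ffunE; apply/eqP; rewrite -eqz_nat !PoszD h //.
Qed.

Lemma stepY (G : graph) (I : Type) (phi : carrier G -> I -> nat) :
  divisor_theory phi -> forall (t : Tt G) h z j,
  agglomeration h -> sgn t h = 0 -> (forall t', t' <> t -> 1 <= sgn t' h) ->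
  agglomeration z -> sgn t z = 1 -> phi h j = 0 ->
  forall a, agglomeration a -> phi a j = sgn t a * phi z j.
Proof.
move=> dt t h z j hh sh hint hz sz phj a ha.
have dt' := dt; case: dt' => [_ [_ [hadd _]]].
pose k := sgn t a.
pose M := \sum_(t' : Tt G) (k * sgn t' z + sgn t' a).
have hM : forall t', k * sgn t' z + sgn t' a <= M.
  move=> t'; exact: (sum_ge_fin (fun t'' => k * sgn t'' z + sgn t'' a)).
have hMh : forall t', t' <> t -> M <= M * sgn t' h.
  move=> t' ne; apply: leq_pmulr; exact: hint.
have hx1 : forall t', (0 <= sgZ t' (fun y => 1 * toZ a y + (- Posz k) * toZ z y + (Posz M) * toZ h y))%R.
  move=> t'; rewrite sgZ_lin -!sgn_Z //.
  case: (eqVneq t' t) => [->|ne].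
    rewrite sh sz /k; lia.
  have := hM t'; have := hMh t' (fun E => (negP ne) (introT eqP E)); nia.
have [c1 [hc1 ec1]] := L0 hx1.
have E1 : addc c1 (smul k z) = addc a (smul M h).
  apply/ffunP => y; rewrite !ffunE; apply/eqP; rewrite -eqz_nat !PoszD !PoszM ec1 /toZ.
  apply/eqP; ring.
have := congr1 (fun b => phi b j) E1 => /=.
rewrite !hadd ?(dt_smul dt) //; try exact: H_smul.
rewrite phj muln0 addn0 => F1.
have hx2 : forall t', (0 <= sgZ t' (fun y => Posz k * toZ z y + (-1) * toZ a y + (Posz M) * toZ h y))%R.
  move=> t'; rewrite sgZ_lin -!sgn_Z //.
  case: (eqVneq t' t) => [->|ne].
    rewrite sh sz /k; lia.
  have := hM t'; have := hMh t' (fun E => (negP ne) (introT eqP E)); nia.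
have [c2 [hc2 ec2]] := L0 hx2.
have E2 : addc c2 a = addc (smul k z) (smul M h).
  apply/ffunP => y; rewrite !ffunE; apply/eqP; rewrite -eqz_nat !PoszD !PoszM ec2 /toZ.
  apply/eqP; ring.
have := congr1 (fun b => phi b j) E2 => /=.
rewrite !hadd ?(dt_smul dt) //; try exact: H_smul.
rewrite phj muln0 addn0 => F2.
lia.
Qed.

Lemma stepP2 (G : graph) (I : Type) (phi : carrier G -> I -> nat) :
  divisor_theory phi -> forall t : Tt G,
  exists j, forall a, agglomeration a -> phi a j = sgn t a.
Proof.
move=> dt t.
have [h [hh [sh hint]]] := interior_facet t.
have [z [hz sz]] := dt_one (sgn_dt G) t.
have [j phj] := stepX dt hh sh hz (eq_leq (esym sz)).
have Y := stepY dt hh sh hint hz sz phj.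
have [a1 [ha1 pa1]] := dt_one dt j.
have : sgn t a1 * phi z j = 1 by rewrite -Y.
move=> /eqP; rewrite muln_eq1 => /andP[_ /eqP pz].
exists j => a ha; by rewrite Y // pz muln1.
Qed.

Lemma stepP1 (G : graph) (I : Type) (phi : carrier G -> I -> nat) :
  divisor_theory phi -> forall i,
  exists t : Tt G, forall a, agglomeration a -> phi a i = sgn t a.
Proof.
move=> dt i; apply: NNPP => nex.
have dt' := dt; case: dt' => [_ [h0 [hadd _]]].
have hex : forall t : Tt G, exists y, agglomeration y /\ (1 <= sgn t y /\ phi y i = 0).
  move=> t; have [j hj] := stepP2 dt t.
  have ne : i <> j by move=> E; apply: nex; exists t; rewrite E.
  have [a [ha [h1 h2]]] := dt_sep dt ne.
  by exists a; rewrite -hj.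
have [F [hF PF]] := choiceT hex.
pose s := csum (enum (Tt G)) F.
have hs : agglomeration s by exact: csum_H.
have ps : phi s i = 0.
  rewrite (@csum_fun G _ (enum (Tt G)) F (fun b => phi b i)) //.
    rewrite big1_seq // => t _; by case: (PF t).
  move=> a b ha hb; exact: hadd.
have ss : forall t, 1 <= sgn t s.
  move=> t; rewrite /s (@csum_fun G _ (enum (Tt G)) F (sgn t)) //; last first.
  - move=> *; exact: sgn_add.
  - exact: sgn_z0.
  apply: leq_trans (proj1 (PF t)) (sum_ge_In (fun t'' => sgn t (F t'')) _).
  apply: inL; exact: mem_enum.
have [a0 [ha0 pa0]] := dt_one dt i.
pose M := \sum_(t : Tt G) sgn t a0.
have hx : forall t, (0 <= sgZ t (fun y => Posz M * toZ s y + (-1) * toZ a0 y + 0 * toZ a0 y))%R.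
  move=> t; rewrite sgZ_lin -!sgn_Z //.
  have := sum_ge_fin (fun t'' => sgn t'' a0) t; have := ss t; rewrite -/M; nia.
have [c [hc ec]] := L0 hx.
have E : addc c a0 = addc (smul M s) (z0 G).
  apply/ffunP => y; rewrite !ffunE; apply/eqP; rewrite -eqz_nat !PoszD !PoszM ec /toZ.
  apply/eqP; ring.
have := congr1 (fun b => phi b i) E => /=.
rewrite !hadd ?(dt_smul dt) //; try exact: H_smul; try exact: H_z0.
rewrite ps pa0 muln0; have -> : phi (z0 G) i = 0 by exact: h0.
lia.
Qed.
Definition ch (G : graph) (v : gV G) : option (gE G * bool) :=
  omap (fun e => (e, v != (gr e).1)) [pick e | incident v e].
Definition chosen (G : graph) : {set gE G * bool} := [set p | [exists v, ch v == Some p]].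
Definition U (G : graph) : {set gE G * bool} := ~: chosen G.

Definition xg (G : graph) (g : Tt G -> int) : gV G + gE G -> int := fun y =>
  match y with
  | inr e => g (inl (inr e))
  | inl v => match (insub v : option {v : gV G | isolated v}) with
             | Some w => g (inr w)
             | None => match ch v with
                       | Some p => (g (inl (inl p)) + g (inl (inr p.1)))%R
                       | None => 0%R end
             end
  end.

Arguments xg : simpl never.
Lemma xg_inr (G : graph) (g : Tt G -> int) e : xg g (inr e) = g (inl (inr e)).
Proof. by []. Qed.

Definition psiS (G : graph) (g : Tt G -> int) : 'I_#|U G| -> int :=
  fun k => (g (inl (inl (enum_val k))) - sgZ (inl (inl (enum_val k))) (xg g))%R.

Lemma ch_endp (G : graph) (v : gV G) p : ch v = Some p -> endp p.1 p.2 = v.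
Proof.
rewrite /ch; case: pickP => //= e ie [<-] /=; rewrite /endp.
case: eqP => [-> //|ne] /=; move: ie; rewrite /incident.
by case/orP => /eqP.
Qed.

Lemma ch_iso (G : graph) (v : gV G) : (ch v == None) = isolated v.
Proof.
rewrite /ch /isolated; case: pickP => [e ie|h] /=.
  apply/esym/negbTE; rewrite negb_forall; apply/existsP; exists e; by rewrite ie.
apply/esym/forallP => e; by rewrite h.
Qed.

Lemma xg_iso (G : graph) (g : Tt G -> int) (w : {v : gV G | isolated v}) :
  xg g (inl (val w)) = g (inr w).
Proof. by rewrite /xg valK. Qed.

Lemma xg_niso (G : graph) (g : Tt G -> int) v : ~~ isolated v ->
  xg g (inl v) = match ch v with
                 | Some p => (g (inl (inl p)) + g (inl (inr p.1)))%R
                 | None => 0%R end.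
Proof. by move=> iv; rewrite /xg insubN. Qed.

Lemma endp_niso (G : graph) (e : gE G) s : ~~ isolated (endp e s).
Proof. rewrite negb_forall; apply/existsP; exists e; by rewrite negbK incident_endp. Qed.

Lemma psiS_add (G : graph) (g1 g2 : Tt G -> int) k :
  psiS (fun t => g1 t + g2 t)%R k = (psiS g1 k + psiS g2 k)%R.
Proof.
rewrite /psiS; case: (enum_val k) => e s /=.
rewrite !xg_niso ?endp_niso // !xg_inr; case: (ch _) => [p|]; ring.
Qed.

Lemma xg_sgZ (G : graph) (x : gV G + gE G -> int) y :
  xg (fun t => sgZ t x) y = x y.
Proof.
case: y => [v|e] //=.
case: (boolP (isolated v)) => iv.
  by rewrite (xg_iso _ (exist _ v iv)).
rewrite xg_niso //; move: iv; rewrite -ch_iso.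
case E: (ch v) => [p|] // _ /=.
have := ch_endp E; case: p E => e s E /= ->; ring.
Qed.

Lemma sgZ_ext (G : graph) (t : Tt G) (x x' : gV G + gE G -> int) :
  (forall y, x y = x' y) -> sgZ t x = sgZ t x'.
Proof. by move=> h; case: t => [[[e s]|e]|w] /=; rewrite !h. Qed.

Lemma psiS_im (G : graph) (x : gV G + gE G -> int) k :
  psiS (fun t => sgZ t x) k = 0%R.
Proof.
rewrite /psiS (sgZ_ext _ (xg_sgZ x)); ring.
Qed.

Lemma psiS_ker (G : graph) (g : Tt G -> int) :
  (forall k, psiS g k = 0%R) -> forall t, g t = sgZ t (xg g).
Proof.
move=> h [[p|e]|w] /=.
- case: (boolP (p \in U G)) => pU.
    have := h (enum_rank_in pU p); rewrite /psiS enum_rankK_in //.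
    move=> E; apply/eqP; rewrite -subr_eq0; exact/eqP.
  move: pU; rewrite inE negbK inE => /existsP[v /eqP chv].
  have ev := ch_endp chv.
  have iv : ~~ isolated v by rewrite -ch_iso chv.
  case: p chv ev => e s chv ev /=; rewrite ev.
  rewrite xg_niso // chv /=; ring.
- by [].
- by rewrite xg_iso.
Qed.

Lemma psiS_surj (G : graph) (y : 'I_#|U G| -> int) :
  exists g : Tt G -> int, psiS g = y.
Proof.
pose g := fun t : Tt G => match t with
  | inl (inl p) => (\sum_(k : 'I_#|U G|) if enum_val k == p then y k else 0)%R
  | _ => 0%R end.
have gU : forall p, p \notin U G -> g (inl (inl p)) = 0%R.
  move=> p pU; rewrite /g big1 // => k _.
  case: eqP => // E; move: pU; rewrite -E; by rewrite enum_valP.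
have gx : forall v, xg g (inl v) = 0%R.
  move=> v; case: (boolP (isolated v)) => iv.
    by rewrite (xg_iso _ (exist _ v iv)).
  rewrite xg_niso //; case E: (ch v) => [p|] //.
  rewrite gU ?addr0 //; rewrite inE negbK inE; apply/existsP; exists v; by rewrite E.
exists g; apply: functional_extensionality => k.
rewrite /psiS.
have -> : sgZ (inl (inl (enum_val k))) (xg g) = 0%R.
  by case: (enum_val k) => e s /=; rewrite gx xg_inr subr0.
rewrite subr0 /g (bigD1 k) //= eqxx big1 ?addr0 // => k' ne.
case: eqP => // /enum_val_inj E; by rewrite E eqxx in ne.
Qed.
Lemma in_map_In (A : eqType) (B : Type) (f : A -> B) (s : seq A) x :
  x \in s -> List.In (f x) (map f s).
Proof. elim: s => // a s IH; rewrite inE => /orP[/eqP ->|/IH]; [left|right] => //. Qed.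

Lemma count_U (G : graph) :
  (Posz #|U G| = 2 * Posz #|gE G| - Posz #|gV G| + Posz (n_isolated G))%R.
Proof.
pose f := fun p : gE G * bool => endp p.1 p.2.
have finj : {in chosen G &, injective f}.
  move=> p q; rewrite !inE => /existsP[v /eqP hv] /existsP[w /eqP hw] E.
  have ev := ch_endp hv; have ew := ch_endp hw.
  have vw : v = w by rewrite -ev -ew; exact: E.
  by move: hv; rewrite vw hw => -[].
have fim : f @: chosen G = [set v : gV G | ~~ isolated v].
  apply/setP => v; rewrite inE; apply/imsetP/idP.
    move=> [p]; rewrite inE => /existsP[w /eqP hw] ->.
    rewrite /f (ch_endp hw) -ch_iso hw //.
  rewrite -ch_iso; case E: (ch v) => [p|] // _; exists p.
    rewrite inE; apply/existsP; exists v; by rewrite E.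
  by rewrite /f (ch_endp E).
have c1 : #|chosen G| = #|[set v : gV G | ~~ isolated v]|.
  by rewrite -fim (card_in_imset finj).
have c2 : #|U G| + #|chosen G| = 2 * #|gE G|.
  rewrite /U addnC cardsC card_prod card_bool; lia.
have c3 : #|[set v : gV G | isolated v]| + #|[set v : gV G | ~~ isolated v]| = #|gV G|.
  have -> : [set v : gV G | ~~ isolated v] = ~: [set v | isolated v].
    by apply/setP => v; rewrite !inE.
  by rewrite cardsC.
rewrite /n_isolated; lia.
Qed.

Theorem corollary4p7 (G : graph) :
  (exists (I : Type) (phi : carrier G -> I -> nat), divisor_theory phi) /\
  (forall (I : Type) (phi : carrier G -> I -> nat), divisor_theory phi ->
     exists n : nat,
       (n%:Z = 2 * (#|gE G|)%:Z - (#|gV G|)%:Z + (n_isolated G)%:Z)%R /\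
       class_group_free_of_rank phi n).
Proof.
split.
  exists (Tt G), (fun a t => sgn t a); exact: sgn_dt.
move=> I phi dt.
have P2 := stepP2 dt; have P1 := stepP1 dt.
pose rho := fun t => proj1_sig (constructive_indefinite_description _ (P2 t)).
have hrho : forall t a, agglomeration a -> phi a (rho t) = sgn t a.
  move=> t; rewrite /rho; by case: (constructive_indefinite_description _ _) => j hj.
pose tau := fun i => proj1_sig (constructive_indefinite_description _ (P1 i)).
have htau : forall i a, agglomeration a -> phi a i = sgn (tau i) a.
  move=> i; rewrite /tau; by case: (constructive_indefinite_description _ _) => j hj.
have rt : forall i, rho (tau i) = i.
  move=> i; apply: (dt_inj dt) => a ha; by rewrite hrho // htau.
have tr : forall t, tau (rho t) = t.
  move=> t; apply: (dt_inj (sgn_dt G)) => a ha /=; by rewrite -htau // hrho.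
exists #|U G|; split; first exact: count_U.
exists (fun f => psiS (fun t => f (rho t))); split; [|split].
- move=> f g _ _; apply: functional_extensionality => k; exact: psiS_add.
- move=> y; have [g hg] := psiS_surj y; exists (fun i => g (tau i)); split.
    exists (map rho (enum (Tt G))) => i _; rewrite -(rt i); apply: in_map_In.
    exact: mem_enum.
  have -> : (fun t => g (tau (rho t))) = g.
    by apply: functional_extensionality => t; rewrite tr.
  exact: hg.
- move=> f _; split.
  + move=> h0.
    have hk : forall k, psiS (fun t => f (rho t)) k = 0%R.
      by move=> k; rewrite h0.
    have hg := psiS_ker hk.
    set x := xg (fun t => f (rho t)) in hg.
    have [u [hu su]] := interior G.
    pose M := \sum_(t : Tt G) `|sgZ t x|%N.
    have hx : forall t, (0 <= sgZ t (fun y => 1 * x y + Posz M * toZ u y + 0 * toZ u y))%R.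
      move=> t; rewrite sgZ_lin -!sgn_Z //.
      have := sum_ge_fin (fun t' => `|sgZ t' x|%N) t; have := su t; rewrite -/M; nia.
    have [a [ha ea]] := L0 hx.
    exists a, (smul M u); split => //; split; first exact: H_smul.
    apply: functional_extensionality => i.
    rewrite -{1}(rt i) hg !htau ?sgn_smul //; last exact: H_smul.
    rewrite PoszM sgn_Z // (sgZ_ext _ ea) sgZ_lin sgn_Z //; ring.
  + move=> [a [b [ha [hb ->]]]]; apply: functional_extensionality => k.
    have -> : (fun t => Posz (phi a (rho t)) - Posz (phi b (rho t)))%R =
              (fun t => sgZ t (fun y => 1 * toZ a y + (-1) * toZ b y + 0 * toZ b y))%R.
      apply: functional_extensionality => t; rewrite sgZ_lin -!sgn_Z // !hrho //; ring.
    exact: psiS_im.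
Qed.
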